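(* Let $P$ be the face poset of a convex polytope $\mathcal P$ and let $Pr(P)$ be the face poset of the prism over $\mathcal P$. Then $$\mathcal{M}_{Pr(P)}(z)=(3-2z)\bigl(\mathcal{M}_P(z)-g^P_{-1}(z)\bigr)+g^{Pr(P)}_{-1}(z).$$
   Context: The face poset of a convex polytope with vertex set $V$ is the set of vertex sets of its faces (including the whole polytope) together with $\emptyset$, ordered by inclusion, ranked by dimension ($|\emptyset|=-1$). For a $d$-dimensional polytope $\mathcal P$, the prism over $\mathcal P$ is the convex hull of two copies of $\mathcal P$ placed in the hyperplanes $x=0$ and $x=1$ of $\mathbb{R}^{d+1}$; its faces are the two copies of each face of $\mathcal P$ and, for each face $F$ of $\mathcal P$, the face of dimension $\dim F+1$ joining the two copies of $F$. The Möbius function $\mu$ is $\mu[p,p]=1$, $\mu[p,q]=-\sum_{p\le s<q}\mu[p,s]$ for $p<q$, $0$ if $p\not\le q$; $\mu_z[p,q]=\mu[p,q]z^{|q|-|p|}$; the Möbius polynomial is $\mathcal{M}_P(z)=\sum_{p\le q\in P}\mu_z[p,q]$; the bottom polynomial is $g^P_{-1}(z)=\sum_{p\le q,\ |p|\le -1\le |q|}\mu_z[p,q]$. *)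

(* Defs.v *)
From HB Require Import structures.
From mathcomp Require Import all_boot all_order all_algebra.
From Stdlib Require Import ClassicalEpsilon.
Set Implicit Arguments. Unset Strict Implicit. Unset Printing Implicit Defensive.
Import Order.TTheory GRing.Theory Num.Theory.
Local Open Scope ring_scope.

Section Polytope.
Variables (R : realFieldType) (n : nat) (T : finType) (V : T -> 'rV[R]_n).

(* F is the vertex set of a face of conv(V): the set of points of V on which
   some linear functional c attains its maximum b over V.  c = 0, b = 0 gives
   the whole polytope; c = 0, b = 1 gives the empty face. *)
Definition is_face (F : {set T}) : Prop :=
  exists (c : 'cV[R]_n) (b : R),
    (forall x, (V x *m c) 0 0 <= b) /\
    (forall x, (x \in F) = ((V x *m c) 0 0 == b)).

Definition faceb (F : {set T}) : bool :=
  if excluded_middle_informative (is_face F) then true else false.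

(* V is the vertex set of the polytope conv(V): each V x is a vertex
   (a 0-dimensional face), which also forces V injective. *)
Definition is_vertex_set : Prop := forall x : T, is_face [set x].

(* dimension of (the affine hull of) a face: rank of the rows (V x, 1), minus 1;
   the empty face has dimension -1. *)
Definition face_dim (F : {set T}) : int :=
  (\rank (\matrix_(i < #|T|, j < n + 1)
           (if enum_val i \in F then row_mx (V (enum_val i)) (1 : 'rV[R]_1) 0 j
            else 0)))%:Z - 1.

Fixpoint mobf (k : nat) (p q : {set T}) : int :=
  match k with
  | 0 => if p == q then 1 else 0
  | k'.+1 =>
      if p == q then 1
      else if p \proper q then
        - \sum_(s : {set T} | [&& faceb s, p \subset s & s \proper q]) mobf k' p s
      else 0
  end.

Definition mobius (p q : {set T}) : int := mobf #|q| p q.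

Definition mobius_z (p q : {set T}) : {poly int} :=
  (mobius p q)%:P * 'X^(absz (face_dim q - face_dim p)).

Definition mobius_poly : {poly int} :=
  \sum_(p : {set T} | faceb p) \sum_(q : {set T} | faceb q && (p \subset q))
     mobius_z p q.

Definition bottom_poly : {poly int} :=
  \sum_(p : {set T} | faceb p) \sum_(q : {set T} | [&& faceb q, p \subset q,
         face_dim p <= -1 & -1 <= face_dim q])
     mobius_z p q.

End Polytope.

Definition prism_vert (R : realFieldType) (n : nat) (T : finType)
  (V : T -> 'rV[R]_n) (x : (T + T)%type) : 'rV[R]_(n + 1) :=
  match x with
  | inl t => row_mx (V t) 0
  | inr t => row_mx (V t) 1
  end.

(* Main.v *)
Require Import Defs.
From HB Require Import structures.
From mathcomp Require Import all_boot all_order all_algebra.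
From Stdlib Require Import ClassicalEpsilon.
From mathcomp Require Import zify ring lra.
Set Implicit Arguments. Unset Strict Implicit. Unset Printing Implicit Defensive.
Import Order.TTheory GRing.Theory Num.Theory.
Local Open Scope ring_scope.


Section Gen.
Variables (R : realFieldType) (n : nat) (T : finType) (V : T -> 'rV[R]_n).

Lemma facebP (F : {set T}) : reflect (is_face V F) (faceb V F).
Proof. rewrite /faceb; case: excluded_middle_informative => H; by constructor. Qed.

Lemma mobf_S k (p q : {set T}) : (#|q| <= k)%N -> mobf V k.+1 p q = mobf V k p q.
Proof.
elim: k p q => [|k IH] p q hq.
  have q0 : q = set0 by apply/eqP; rewrite -cards_eq0 -leqn0.
  subst q => /=; case: (p == set0) => //.
  by rewrite properE sub0set andbF.
rewrite [LHS]/= [RHS]/=; case: (p == q) => //; case: ifP => // pq.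
congr (- _); apply: eq_bigr => s /and3P[_ _ sq]; apply: IH.
by have := proper_card sq; move: hq; lia.
Qed.

Lemma mobf_mobius k (p q : {set T}) : (#|q| <= k)%N -> mobf V k p q = mobius V p q.
Proof.
move=> hq; rewrite /mobius; elim: k hq => [|k IH] hq.
  by have -> : #|q| = 0%N by apply/eqP; rewrite -leqn0.
case: (ltngtP #|q| k.+1) => h.
- by rewrite mobf_S ?IH.
- by move: hq; rewrite leqNgt h.
- by rewrite h.
Qed.

Lemma mobius_unfold (p q : {set T}) : mobius V p q =
  if p == q then 1 else if p \proper q then
    - \sum_(s : {set T} | [&& faceb V s, p \subset s & s \proper q]) mobius V p s
  else 0.
Proof.
rewrite {1}/mobius; case hq: #|q| => [|k] /=.
  case: (p == q) => //; case: ifP => // pq.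
  by have := proper_card pq; rewrite hq.
case: (p == q) => //; case: ifP => // pq; congr (- _).
apply: eq_bigr => s /and3P[_ _ sq]; apply: mobf_mobius.
by have := proper_card sq; rewrite hq.
Qed.

Lemma mobius_uniq (p : {set T}) (h : {set T} -> int) :
  (forall q, faceb V q -> p \subset q -> h q = if p == q then 1 else
    - \sum_(s : {set T} | [&& faceb V s, p \subset s & s \proper q]) h s) ->
  forall q, faceb V q -> p \subset q -> h q = mobius V p q.
Proof.
move=> H q; have [k] := ubnP #|q|; elim: k q => // k IH q hk fq pq.
rewrite H // mobius_unfold; case: eqP => // /eqP npq.
rewrite properEneq npq pq; congr (- _); apply: eq_bigr => s /and3P[fs ps sq].
apply: IH => //; have := proper_card sq; move: hk; lia.
Qed.

Lemma mobius_sum (p q : {set T}) : p \subset q -> p != q ->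
  \sum_(s : {set T} | [&& faceb V s, p \subset s & s \proper q]) mobius V p s
  = - mobius V p q.
Proof.
move=> pq npq; rewrite [in RHS]mobius_unfold (negbTE npq) properEneq npq pq.
by rewrite opprK.
Qed.

End Gen.


Section Dim.
Variables (R : realFieldType) (n : nat) (T : finType) (V : T -> 'rV[R]_n).

Definition sp (F : {set T}) := (\sum_(x in F) <<row_mx (V x) (1:'rV[R]_1)>>)%MS.

Lemma dimE F : face_dim V F = (\rank (sp F))%:Z - 1.
Proof.
rewrite /face_dim; congr (_ - _); congr (Posz _).
set A := \matrix_(i, j) _.
set w := fun x => row_mx (V x) (1:'rV[R]_1).
have rA i : row i A = if enum_val i \in F then w (enum_val i) else 0.
  by apply/rowP=> j; rewrite !mxE; case: ifP; rewrite ?mxE.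
have eA : (A :=: \sum_i <<row i A>>)%MS.
  apply/eqmxP/andP; split.
    by apply/row_subP => i; apply: (sumsmx_sup i) => //; rewrite genmxE.
  by apply/sumsmx_subP => i _; rewrite genmxE row_sub.
rewrite eA /sp; congr (\rank _).
rewrite (eq_bigr (fun i => if enum_val i \in F then <<w (enum_val i)>>%MS else 0)); last first.
  by move=> i _; rewrite rA; case: ifP; rewrite ?genmx0.
rewrite -big_mkcond /= [RHS](reindex (fun i : 'I_#|T| => enum_val i)) //=.
by exists enum_rank => x _; [exact: enum_valK | exact: enum_rankK].
Qed.

Lemma dim0 : face_dim V set0 = -1.
Proof. by rewrite dimE /sp big_set0 mxrank0. Qed.

Lemma rank_sp_ge1 (F : {set T}) : F != set0 -> (1 <= \rank (sp F))%N.
Proof.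
case/set0Pn => x xF.
have h : (<<row_mx (V x) (1:'rV[R]_1)>> <= sp F)%MS by apply: (sumsmx_sup x).
apply: leq_trans (mxrankS h); rewrite genmxE lt0n mxrank_eq0 row_mx_eq0 negb_and.
by rewrite orbC oner_eq0.
Qed.

Lemma dim_ge0 (F : {set T}) : F != set0 -> 0 <= face_dim V F.
Proof. move=> /rank_sp_ge1; rewrite dimE subr_ge0 lez_nat //. Qed.

Lemma dim_le (F G : {set T}) : F \subset G -> face_dim V F <= face_dim V G.
Proof.
move=> FG; rewrite !dimE lerD2r lez_nat; apply: mxrankS.
apply/sumsmx_subP => x xF; apply: (sumsmx_sup x) => //.
exact: (subsetP FG).
Qed.

Lemma dim_lem1 (F : {set T}) : (face_dim V F <= -1) = (F == set0).
Proof.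
case: eqP => [->|/eqP F0]; first by rewrite dim0.
by have := dim_ge0 F0; apply: contraTF => h; rewrite -ltNge; apply: le_lt_trans h _.
Qed.

Lemma dim_gem1 (F : {set T}) : (-1 <= face_dim V F).
Proof. by rewrite dimE lerBrDr addNr. Qed.

Lemma Mg : mobius_poly V - bottom_poly V =
  \sum_(p | faceb V p && (p != set0)) \sum_(q | faceb V q && (p \subset q)) mobius_z V p q.
Proof.
rewrite /mobius_poly /bottom_poly (bigID (fun p => p == set0)) /=.
rewrite [X in _ - X](bigID (fun p => p == set0)) /=.
rewrite [X in _ - (_ + X)]big1 ?addr0; last first.
  move=> p /andP[_ /negbTE p0]; apply: big_pred0 => q.
  by rewrite dim_lem1 p0 !andbF.
rewrite [X in _ - X](eq_bigr (fun i : {set T} => \sum_(q | faceb V q && (i \subset q)) mobius_z V i q)).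
  by rewrite addrAC subrr add0r.
move=> p /andP[_ /eqP ->]; apply: eq_bigl => q.
by rewrite dim0 lexx dim_gem1 !andbT.
Qed.
End Dim.


Section Emb.
Variable T : finType.

Definition emb (k : option bool) (G : {set T}) : {set (T + T)} :=
  [set x : T + T | match x with
                   | inl t => (k != Some true) && (t \in G)
                   | inr t => (k != Some false) && (t \in G) end].



Lemma emb0 k : emb k set0 = set0.
Proof. by apply/setP => -[t|t]; rewrite !inE andbF. Qed.

Lemma emb_neq0 k (G : {set T}) : G != set0 -> emb k G != set0.
Proof.
case/set0Pn => t tG; apply/set0Pn.
case: k => [[]|]; [exists (inr t) | exists (inl t) | exists (inl t)];
  by rewrite inE tG.
Qed.

Lemma emb_sub a b (F G : {set T}) : F != set0 ->
  (emb a F \subset emb b G) = (F \subset G) && ((a == b) || (b == None)).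
Proof.
case/set0Pn => t0 t0F.
apply/subsetP/andP => [h|[/subsetP FG hab] x].
- have hl t : t \in F -> a != Some true -> (b != Some true) && (t \in G).
    by move=> tF ha; have := h (inl t); rewrite !inE ha tF; apply.
  have hr t : t \in F -> a != Some false -> (b != Some false) && (t \in G).
    by move=> tF ha; have := h (inr t); rewrite !inE ha tF; apply.
  split.
    apply/subsetP => t tF; clear h; case: a hl hr => [[]|] hl hr;
      by [case/andP: (hr t tF isT) | case/andP: (hl t tF isT)].
  move: (hl t0 t0F) (hr t0 t0F); clear h hl hr.
  by case: a => [[]|]; case: b => [[]|] //= H1 H2;
    first [by have := H1 isT | by have := H2 isT | by case/andP: (H1 isT) | by case/andP: (H2 isT)].
- case: x => t; rewrite !inE => /andP[ha tF]; rewrite FG // andbT;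
  by move: hab ha; case: a => [[]|]; case: b => [[]|].
Qed.

Lemma emb_eq a b (F G : {set T}) : F != set0 ->
  (emb a F == emb b G) = (F == G) && (a == b).
Proof.
move=> F0; apply/eqP/andP => [E|[/eqP -> /eqP ->] //].
have G0 : G != set0.
  by apply/eqP => G0; move: (emb_neq0 a F0); rewrite E G0 emb0 eqxx.
have h1 := emb_sub a b G F0; have h2 := emb_sub b a F G0.
rewrite E subxx in h1; rewrite E subxx in h2.
have /andP[FG ab] : (F \subset G) && ((a == b) || (b == None)) by rewrite -h1.
have /andP[GF ba] : (G \subset F) && ((b == a) || (a == None)) by rewrite -h2.
split; first by rewrite eqEsubset FG GF.
by move: ab ba; clear E h1 h2; case: a => [[]|]; case: b => [[]|].
Qed.

End Emb.
Arguments emb {T}.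



Section Prism.
Variables (R : realFieldType) (n : nat) (T : finType) (V : T -> 'rV[R]_n).

Lemma pv_inl (cu : 'cV[R]_n) (cd : 'cV[R]_1) t :
  (prism_vert V (inl t) *m col_mx cu cd) 0 0 = (V t *m cu) 0 0.
Proof. by rewrite /= mul_row_col mul0mx addr0. Qed.

Lemma pv_inr (cu : 'cV[R]_n) (cd : 'cV[R]_1) t :
  (prism_vert V (inr t) *m col_mx cu cd) 0 0 = (V t *m cu) 0 0 + cd 0 0.
Proof. by rewrite /= mul_row_col mul1mx mxE. Qed.

Lemma face_emb k G : is_face V G -> is_face (prism_vert V) (emb k G).
Proof.
case=> c [b [H1 H2]].
have cE (a : R) : (const_mx a : 'cV[R]_1) 0 0 = a by rewrite mxE.
case: k => [[]|].
- exists (col_mx c (const_mx 1)), (b + 1); split.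
    by case=> t; rewrite ?pv_inl ?pv_inr ?cE; have := H1 t; lra.
  case=> t; rewrite ?pv_inl ?pv_inr ?cE inE /=.
    by apply/esym/negbTE/eqP => E; have := H1 t; lra.
  rewrite H2; apply/eqP/eqP => E; lra.
- exists (col_mx c (const_mx (-1))), b; split.
    by case=> t; rewrite ?pv_inl ?pv_inr ?cE; have := H1 t; lra.
  case=> t; rewrite ?pv_inl ?pv_inr ?cE inE /=.
    by rewrite H2.
  by apply/esym/negbTE/eqP => E; have := H1 t; lra.
- exists (col_mx c (const_mx 0)), b; split.
    by case=> t; rewrite ?pv_inl ?pv_inr ?cE ?addr0; have := H1 t; lra.
  by case=> t; rewrite ?pv_inl ?pv_inr ?cE inE /= ?addr0 H2.
Qed.

Lemma emb_face (S : {set T + T}) : is_face (prism_vert V) S ->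
  exists k G, is_face V G /\ S = emb k G.
Proof.
case=> c [b [H1 H2]].
rewrite -[c]vsubmxK in H1 H2.
set cu := usubmx c in H1 H2; set g := dsubmx c 0 0.
set v := fun t => (V t *m cu) 0 0.
have Hl t : v t <= b by have := H1 (inl t); rewrite pv_inl.
have Hr t : v t + g <= b by have := H1 (inr t); rewrite pv_inr.
have Ml t : (inl t \in S) = (v t == b) by rewrite H2 pv_inl.
have Mr t : (inr t \in S) = (v t + g == b) by rewrite H2 pv_inr.
case: (ltgtP g 0) => hg.
- exists (Some false), [set t | v t == b]; split.
    by exists cu, b; split => // t; rewrite inE.
  apply/setP => -[t|t]; rewrite !inE /=.
    by rewrite Ml.
  by rewrite Mr; apply/negbTE/eqP => E; have := Hl t; lra.
- exists (Some true), [set t | v t == b - g]; split.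
    by exists cu, (b - g); split => [t|t]; rewrite ?inE //; have := Hr t; rewrite /v; lra.
  apply/setP => -[t|t]; rewrite !inE /=.
    by rewrite Ml; apply/negbTE/eqP => E; have := Hr t; lra.
  by rewrite Mr; apply/eqP/eqP => E; lra.
- exists None, [set t | v t == b]; split.
    by exists cu, b; split => // t; rewrite inE.
  apply/setP => -[t|t]; rewrite !inE /=.
    by rewrite Ml.
  by rewrite Mr hg addr0.
Qed.

End Prism.


Section PD.
Variables (R : realFieldType) (n : nat) (T : finType) (V : T -> 'rV[R]_n).

Definition u t : 'rV[R]_(n + 1) := row_mx (V t) 1.
Definition w0 t : 'rV[R]_(n + 1 + 1) := row_mx (row_mx (V t) 0) 1.
Definition w1 t : 'rV[R]_(n + 1 + 1) := row_mx (row_mx (V t) 1) 1.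
Definition E0 : 'M[R]_(n + 1, n + 1 + 1) :=
  col_mx (row_mx (row_mx 1%:M 0) 0) (row_mx 0 1).
Definition E1 : 'M[R]_(n + 1, n + 1 + 1) :=
  col_mx (row_mx (row_mx 1%:M 0) 0) (row_mx (row_mx 0 1) 1).
Definition D : 'M[R]_(n + 1 + 1, n + 1) :=
  col_mx (col_mx (row_mx 1%:M 0) 0) (row_mx 0 1).

Lemma uE0 t : u t *m E0 = w0 t.
Proof.
rewrite /u /E0 /w0 mul_row_col !mul_mx_row !mulmx1 !mulmx0.
by rewrite add_row_mx addr0 add0r.
Qed.

Lemma uE1 t : u t *m E1 = w1 t.
Proof.
rewrite /u /E1 /w1 mul_row_col !mul_mx_row !mulmx1 !mulmx0.
by rewrite !add_row_mx !addr0 !add0r.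
Qed.

Lemma E0D : E0 *m D = 1%:M.
Proof.
rewrite /E0 /D !mul_col_mx !mul_row_col !mul0mx !mul1mx !addr0 add0r.
by rewrite [RHS](scalar_mx_block n 1).

Qed.

Lemma E1D : E1 *m D = 1%:M.
Proof.
rewrite /E1 /D !mul_col_mx !mul_row_col !mul0mx !mul1mx !addr0 !add0r.
by rewrite [RHS](scalar_mx_block n 1).
Qed.

Lemma rank_mulE k m (G : {set T}) (x : T -> 'rV[R]_k) (E : 'M[R]_(k, m)) (Di : 'M[R]_(m, k)) :
  E *m Di = 1%:M ->
  \rank (\sum_(t in G) <<x t *m E>>)%MS = \rank (\sum_(t in G) <<x t>>)%MS.
Proof.
move=> ED; set S := (\sum_(t in G) <<x t>>)%MS.
have e : (S *m E :=: \sum_(t in G) <<x t *m E>>)%MS.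
  apply: eqmx_trans (sumsmxMr_gen _ _ _) _; rewrite (eq_bigr (fun t => <<x t *m E>>%MS)) //.
  by move=> t _; apply: eq_genmx; apply: eqmxMr; apply: genmxE.
rewrite -e; apply/eqP; rewrite eqn_leq mxrankM_maxl /=.
by rewrite -{1}[S]mulmx1 -ED mulmxA mxrankM_maxl.
Qed.

Definition S0 (G : {set T}) := (\sum_(t in G) <<w0 t>>)%MS.
Definition S1 (G : {set T}) := (\sum_(t in G) <<w1 t>>)%MS.
Definition Sg (G : {set T}) := (\sum_(t in G) <<u t>>)%MS.

Lemma rankS0 G : \rank (S0 G) = \rank (Sg G).
Proof.
rewrite /S0 -(@rank_mulE _ _ G u E0 D E0D); congr (\rank _).
by apply: eq_bigr => t _; rewrite uE0.
Qed.

Lemma rankS1 G : \rank (S1 G) = \rank (Sg G).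
Proof.
rewrite /S1 -(@rank_mulE _ _ G u E1 D E1D); congr (\rank _).
by apply: eq_bigr => t _; rewrite uE1.
Qed.

Definition e : 'rV[R]_(n + 1 + 1) := row_mx (row_mx 0 1) 0.
Definition cm : 'cV[R]_(n + 1 + 1) := col_mx (col_mx 0 1) 0.

Lemma w1E t : w1 t = w0 t + e.
Proof. by rewrite /w1 /w0 /e !add_row_mx !addr0 add0r. Qed.

Lemma w0cm t : w0 t *m cm = 0.
Proof. rewrite /w0 /cm !mul_row_col !mulmx0 (mul0mx 1 (1%:M : 'M[R]_1)). by rewrite !addr0. Qed.

Lemma ecm : e *m cm = 1.
Proof. by rewrite /e /cm !mul_row_col !mulmx0 ?mul0mx !addr0 add0r mul1mx. Qed.

Lemma rankS01 G : G != set0 -> \rank (S0 G + S1 G)%MS = (\rank (Sg G)).+1.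
Proof.
case/set0Pn => t0 t0G.
have w0S t : t \in G -> (w0 t <= S0 G)%MS.
  by move=> tG; apply: (sumsmx_sup t) => //; rewrite genmxE.
have w1S t : t \in G -> (w1 t <= S1 G)%MS.
  by move=> tG; apply: (sumsmx_sup t) => //; rewrite genmxE.
have eq1 : (S0 G + S1 G == S0 G + e)%MS.
  apply/andP; split; rewrite addsmx_sub addsmxSl /=.
    apply/sumsmx_subP => t tG; rewrite genmxE w1E.
    by apply: addmx_sub_adds => //; apply: w0S.
  have -> : e = - w0 t0 + w1 t0 by rewrite w1E addrA addNr add0r.
  apply: addmx_sub_adds; last by apply: w1S.
  by rewrite eqmx_opp; apply: w0S.
rewrite (eqmx_rank eq1) -rankS0.
have sub0 : (S0 G <= kermx cm)%MS.
  by apply/sumsmx_subP => t _; rewrite genmxE sub_kermx w0cm.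
have ne : ~~ (e <= S0 G)%MS.
  apply/negP => /submx_trans /(_ sub0); rewrite sub_kermx ecm.
  by rewrite oner_eq0.
apply/eqP; rewrite eqn_leq; apply/andP; split.
  have := mxrank_adds_leqif (S0 G) e; case => h _.
  apply: leq_trans h _; move: (rank_leq_row e); set a := \rank e; set b := \rank (S0 G); lia.
have [h1 h2] := mxrank_leqif_sup (addsmxSl (S0 G) e).
rewrite ltn_neqAle h1 andbT h2 addsmx_sub submx_refl /=; exact: ne.
Qed.

End PD.


Section P7.
Variables (R : realFieldType) (n : nat) (T : finType) (V : T -> 'rV[R]_n).

Lemma dim_emb k (G : {set T}) : G != set0 ->
  face_dim (prism_vert V) (emb k G) = face_dim V G + (if k == None then 1 else 0).
Proof.
move=> G0; rewrite !dimE /sp big_sumType.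
have hl t : (inl t \in emb k G) = (k != Some true) && (t \in G) by rewrite inE.
have hr t : (inr t \in emb k G) = (k != Some false) && (t \in G) by rewrite inE.
rewrite (eq_bigl _ _ hl) (eq_bigl _ _ hr).
case: k {hl hr} => [[]|] /=.
- rewrite big_pred0_eq adds0mx_id addr0.
  by have := rankS1 V G; rewrite /S1 /Sg /w1 /u => ->.
  rewrite big_pred0_eq addsmx0_id addr0.
  by have := rankS0 V G; rewrite /S0 /Sg /w0 /u => ->.
- have := rankS01 V G0; rewrite /S0 /S1 /Sg /w0 /w1 /u => ->.
  rewrite intS; ring.
Qed.


Lemma faceb_emb k (G : {set T}) : faceb V G -> faceb (prism_vert V) (emb k G).
Proof. by move/facebP => h; apply/facebP; apply: face_emb. Qed.

Lemma faceb_pr (S : {set T + T}) : faceb (prism_vert V) S ->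
  exists k G, faceb V G /\ S = emb k G.
Proof.
move/facebP/emb_face => [k [G [fG ->]]]; exists k, G; split => //.
exact/facebP.
Qed.

Lemma sum_pr (W : nmodType) (f : {set T + T} -> W) :
  \sum_(S | faceb (prism_vert V) S && (S != set0)) f S =
  \sum_(G | faceb V G && (G != set0)) \sum_(k : option bool) f (emb k G).
Proof.
rewrite pair_big_dep /=.
set h := fun p : {set T} * option bool => emb p.2 p.1.
set A := [set p : {set T} * option bool | faceb V p.1 && (p.1 != set0)].
rewrite (eq_bigl (fun S => S \in h @: A)); last first.
  move=> S; apply/andP/imsetP.
    case=> fS S0; have [k [G [fG E]]] := faceb_pr fS.
    exists (G, k); rewrite // inE /= fG /=.
    by apply: contraNneq S0 => G0; rewrite E G0 emb0.
  case=> [[G k]]; rewrite inE /= => /andP[fG G0] ->.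
  by split; [exact: faceb_emb | exact: emb_neq0].
rewrite big_imset /=.
  by apply: eq_bigl => p; rewrite inE andbT.
move=> [G k] [G' k']; rewrite !inE /= => /andP[_ G0] _ E.
have /andP[/eqP -> /eqP ->] : (G == G') && (k == k').
  by rewrite -emb_eq //; apply/eqP; exact: E.
by [].
Qed.

End P7.


Lemma sum_opt (W : nmodType) (F : option bool -> W) :
  \sum_(k : option bool) F k = F None + F (Some true) + F (Some false).
Proof. rewrite unlock /reducebig /index_enum !unlock /= !unlock /=. by rewrite addr0 addrA. Qed.

Definition seg (a b : option bool) : int :=
  if a == b then 1 else if b == None then -1 else 0.

Section P8.
Variables (R : realFieldType) (n : nat) (T : finType) (V : T -> 'rV[R]_n).

Definition decG (q : {set T + T}) : {set T} := [set t | (inl t \in q) || (inr t \in q)].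
Definition kind (q : {set T + T}) : option bool :=
  if [exists t, inl t \in q] then (if [exists t, inr t \in q] then None else Some false)
  else Some true.

Lemma decG_emb k (G : {set T}) : decG (emb k G) = G.
Proof.
apply/setP => t; rewrite !inE; case: (t \in G); rewrite ?andbF ?andbT //.
by case: k => [[]|].
Qed.

Lemma kind_emb k (G : {set T}) : G != set0 -> kind (emb k G) = k.
Proof.
case/set0Pn => t0 t0G; rewrite /kind.
case: k => [[]|].
- have -> : [exists t, inl t \in emb (Some true) G] = false.
    by apply/negbTE/existsPn => t; rewrite inE.
  by [].
- have -> : [exists t, inl t \in emb (Some false) G] by apply/existsP; exists t0; rewrite inE.
  have -> : [exists t, inr t \in emb (Some false) G] = false.
    by apply/negbTE/existsPn => t; rewrite inE.
  by [].
- have -> : [exists t, inl t \in emb None G] by apply/existsP; exists t0; rewrite inE.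
  have -> : [exists t, inr t \in emb None G] by apply/existsP; exists t0; rewrite inE.
  by [].
Qed.

Lemma sumV (F G : {set T}) (g : {set T} -> int) : F != set0 ->
  \sum_(H | faceb V H && (H != set0))
     (if (F \subset H) && ((H \subset G) && ~~ (G \subset H)) then g H else 0)
  = \sum_(H | [&& faceb V H, F \subset H & H \proper G]) g H.
Proof.
move=> F0; rewrite -big_mkcondr; apply: eq_bigl => H.
rewrite properE; case fH: (F \subset H); rewrite ?andbF //=.
have -> // : H != set0.
  by apply: contraNneq F0 => H0; rewrite -subset0 -H0.
by rewrite andbT.
Qed.

Lemma sum_diag (F G : {set T}) (g : {set T} -> int) : faceb V G -> G != set0 ->
  F \subset G ->
  \sum_(H | faceb V H && (H != set0))
     (if [&& F \subset H, H \subset G & G \subset H] then g H else 0) = g G.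
Proof.
move=> fG G0 FG; rewrite (bigD1 G) /=; last by rewrite fG G0.
rewrite FG subxx /= big1 ?addr0 // => H /andP[_ HG].
case: (F \subset H) => //=; case: ifP => // /andP[h1 h2].
by move: HG; rewrite eqEsubset h1 h2.
Qed.


Lemma mob_pr a b (F G : {set T}) : faceb V F -> F != set0 -> faceb V G ->
  F \subset G -> (a == b) || (b == None) ->
  mobius (prism_vert V) (emb a F) (emb b G) = mobius V F G * seg a b.
Proof.
move=> fF F0 fG FG hab.
have G0 : G != set0.
  by apply: contraNneq F0 => G0; rewrite -subset0 -G0.
set h := fun q => mobius V F (decG q) * seg a (kind q).
have hq : forall q, faceb (prism_vert V) q -> emb a F \subset q ->
   h q = if emb a F == q then 1 else
    - \sum_(s : {set T + T} | [&& faceb (prism_vert V) s, emb a F \subset s & s \proper q]) h s.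
  move=> q fq pq.
  have [b' [G' [fG' E]]] := faceb_pr fq; subst q.
  have G'0 : G' != set0.
    apply: contraTneq pq => ->; rewrite emb0 subset0; exact: emb_neq0.
  move: pq; rewrite emb_sub // => /andP[FG' hab'].
  rewrite /h decG_emb kind_emb // emb_eq //.
  rewrite (eq_bigl (fun s => (faceb (prism_vert V) s && (s != set0)) &&
       ((emb a F \subset s) && (s \proper emb b' G')))); last first.
    move=> s; case fs: (faceb _ s) => //=; case es: (emb a F \subset s) => //=; rewrite ?andbF //.
    have -> // : s != set0.
    apply: contraTneq es => ->; rewrite subset0; exact: emb_neq0.
  rewrite (big_mkcondr _ _ (fun s : {set T + T} => faceb (prism_vert V) s && (s != set0))) sum_pr.
  rewrite (eq_bigr (fun H : {set T} => \sum_(c : option bool)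
     if ((F \subset H) && ((a == c) || (c == None))) &&
        (((H \subset G') && ((c == b') || (b' == None))) &&
          ~~ ((G' \subset H) && ((b' == c) || (c == None))))
     then mobius V F H * seg a c else 0)); last first.
    move=> H /andP[_ H0]; apply: eq_bigr => c _.
    by rewrite properE !emb_sub // decG_emb kind_emb.
  rewrite (eq_bigr (fun H : {set T} =>
     if a == b' then (if (F \subset H) && ((H \subset G') && ~~ (G' \subset H))
                      then mobius V F H else 0)
     else (if [&& F \subset H, H \subset G' & G' \subset H] then mobius V F H else 0)));
    last first.
    move=> H _; rewrite sum_opt /seg.
    move: hab'; clear.
    by case: a => [[]|]; case: b' => [[]|] //= _;
      case: (F \subset H); case: (H \subset G'); case: (G' \subset H) => /=; ring.
  case: (eqVneq a b') => [<-|ab].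
    rewrite /seg eqxx mulr1 andbT sumV //.
    case: (eqVneq F G') => [<-|FG'']; first by rewrite mobius_unfold eqxx.
    by rewrite mobius_sum // opprK.
  rewrite sum_diag // andbF /seg (negbTE ab).
  have -> : b' == None by move: hab'; rewrite (negbTE ab).
  by rewrite mulrN1.
have := mobius_uniq hq (faceb_emb b fG) _.
rewrite /h decG_emb kind_emb // => <- //.
by rewrite emb_sub // FG.
Qed.

End P8.


Lemma inner_sum (R : realFieldType) (n : nat) (T : finType) (V : T -> 'rV[R]_n)
  (W : nmodType) (p : {set T}) (f : {set T} -> W) : p != set0 ->
  \sum_(q | faceb V q && (p \subset q)) f q =
  \sum_(q | faceb V q && (q != set0)) (if p \subset q then f q else 0).
Proof.
move=> p0; rewrite -big_mkcondr; apply: eq_bigl => q.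
case pq: (p \subset q); rewrite ?andbF // !andbT.
have -> // : q != set0.
  by apply: contraNneq p0 => q0; rewrite -subset0 -q0.
by rewrite andbT.
Qed.

Unset Implicit Arguments.
Theorem mainTheorem7 (R : realFieldType) (n : nat) (T : finType)
  (V : T -> 'rV[R]_n) (hV : is_vertex_set V) :
  mobius_poly (prism_vert V) =
    (3%:P - 2%:P * 'X) * (mobius_poly V - bottom_poly V)
    + bottom_poly (prism_vert V).
Proof.
suff key : mobius_poly (prism_vert V) - bottom_poly (prism_vert V) =
  (3%:P - 2%:P * 'X) * (mobius_poly V - bottom_poly V).
  by rewrite -key subrK.
rewrite !Mg.
rewrite (eq_bigr (fun p : {set T + T} => \sum_(G | faceb V G && (G != set0))
    \sum_(b : option bool) (if p \subset emb b G
       then mobius_z (prism_vert V) p (emb b G) else 0))); last first.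
  by move=> p /andP[_ p0]; rewrite inner_sum // sum_pr.
rewrite sum_pr.
rewrite [in RHS](eq_bigr (fun F : {set T} => \sum_(G | faceb V G && (G != set0))
    (if F \subset G then mobius_z V F G else 0))); last first.
  by move=> F /andP[_ F0]; rewrite inner_sum.
rewrite mulr_sumr; apply: eq_bigr => F /andP[fF F0].
rewrite exchange_big /= mulr_sumr; apply: eq_bigr => G /andP[fG G0].
rewrite !sum_opt !emb_sub //.
case FG: (F \subset G); last by rewrite /= !addr0 mulr0.
rewrite /= /mobius_z !mob_pr // !dim_emb // /seg /=.
have hd : 0 <= face_dim V G - face_dim V F by rewrite subr_ge0 dim_le.
have [d hdd] : exists d : nat, face_dim V G - face_dim V F = d%:Z.
  by exists `|face_dim V G - face_dim V F|%N; rewrite abszE ger0_norm.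
have e1 : face_dim V G + 1 - (face_dim V F + 1) = d%:Z by rewrite -hdd; ring.
have e2 : face_dim V G + 1 - (face_dim V F + 0) = (d.+1)%:Z by rewrite intS -hdd; ring.
have e3 : face_dim V G + 0 - (face_dim V F + 0) = d%:Z by rewrite -hdd; ring.
rewrite ?e1 ?e2 ?e3 hdd /= exprSr.
ring.
Qed.
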